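(* Let $(k,\nu)$ be a valued field with value group contained in $\mathbb{Z}$, let $V$ be a $k$-vector space of finite dimension $r$ with a value function $\operatorname{val}\colon V\to\mathbb{Z}\cup\{\infty\}$, and let $x\in k$ with $\nu(x)=1$. Consider the following procedure, applied to a $k$-basis $B_1,\dots,B_r$ of $V$: for $d=1,\dots,r$ in turn, first replace $B_d$ by $x^{-\operatorname{val}(B_d)}B_d$; then, as long as there exist $\alpha_1,\dots,\alpha_{d-1}\in k$ with $\operatorname{val}(\alpha_1B_1+\cdots+\alpha_{d-1}B_{d-1}+B_d)>0$, choose such $\alpha_1,\dots,\alpha_{d-1}$ and replace $B_d$ by $x^{-1}(\alpha_1B_1+\cdots+\alpha_{d-1}B_{d-1}+B_d)$. Finally return $B_1,\dots,B_r$. Then the procedure is correct: whenever it terminates, the returned elements $B_1,\dots,B_r$ form a $k$-basis of $V$ which is also an $\mathcal{O}_{(k,\nu)}$-module basis of the module $\mathcal{O}_{(V,\operatorname{val})}$ of integral elements of $V$ (i.e. a local integral basis of $V$ with respect to $\operatorname{val}$).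
   Context: A valuation on a field $k$ (of characteristic zero) with values in $\mathbb{Z}\cup\{\infty\}$ is a map $\nu$ with $\nu(a)=\infty\iff a=0$, $\nu(ab)=\nu(a)+\nu(b)$, $\nu(a+b)\ge\min\{\nu(a),\nu(b)\}$; $\mathcal{O}_{(k,\nu)}=\{a\in k:\nu(a)\ge0\}$. A value function on a $k$-vector space $V$ is a map $\operatorname{val}\colon V\to\mathbb{Z}\cup\{\infty\}$ with $\operatorname{val}(v)=\infty\iff v=0$, $\operatorname{val}(av)=\nu(a)+\operatorname{val}(v)$ for $a\in k$, and $\operatorname{val}(v+w)\ge\min\{\operatorname{val}(v),\operatorname{val}(w)\}$. An element $v$ is integral if $\operatorname{val}(v)\ge0$, and $\mathcal{O}_{(V,\operatorname{val})}$ denotes the set of integral elements. *)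

(* Defs.v *)
From HB Require Import structures.
From mathcomp Require Import all_boot all_order all_algebra.
Set Implicit Arguments. Unset Strict Implicit. Unset Printing Implicit Defensive.
Import Order.TTheory GRing.Theory Num.Theory.
Local Open Scope ring_scope.

(* Z ∪ {∞}: [Some n] is the integer n, [None] is ∞. *)
Definition zinf := option int.

Definition zi_le (a b : zinf) : bool :=
  match a, b with
  | _, None => true
  | None, Some _ => false
  | Some m, Some n => (m <= n)%R
  end.

Definition zi_add (a b : zinf) : zinf :=
  match a, b with
  | Some m, Some n => Some (m + n)%R
  | _, _ => None
  end.

Definition zi_min (a b : zinf) : zinf := if zi_le a b then a else b.

Definition zi_gt0 (a : zinf) : bool :=
  match a with None => true | Some n => (0 < n)%R end.

Definition is_valuation (k : fieldType) (nu : k -> zinf) : Prop :=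
  [/\ forall a, nu a = None <-> a = 0,
      forall a b, nu (a * b) = zi_add (nu a) (nu b)
    & forall a b, zi_le (zi_min (nu a) (nu b)) (nu (a + b))].

Definition is_value_function (k : fieldType) (nu : k -> zinf)
    (V : vectType k) (val : V -> zinf) : Prop :=
  [/\ forall v, val v = None <-> v = 0,
      forall (a : k) (v : V), val (a *: v) = zi_add (nu a) (val v)
    & forall v w, zi_le (zi_min (val v) (val w)) (val (v + w))].

Definition integralk (k : fieldType) (nu : k -> zinf) (a : k) : bool :=
  zi_le (Some 0%R) (nu a).
Definition integralV (k : fieldType) (V : vectType k) (val : V -> zinf) (v : V) : bool :=
  zi_le (Some 0%R) (val v).

Definition is_integral_basis (k : fieldType) (nu : k -> zinf)
    (V : vectType k) (val : V -> zinf) (B : seq V) : Prop :=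
  [/\ forall i, (i < size B)%N -> integralV val (B`_i),
      forall v, integralV val v ->
        exists c : 'I_(size B) -> k,
          (forall i, integralk nu (c i)) /\ v = \sum_(i < size B) c i *: B`_i
    & forall c : 'I_(size B) -> k, (forall i, integralk nu (c i)) ->
        \sum_(i < size B) c i *: B`_i = 0 -> forall i, c i = 0].

Section Procedure.
Variables (k : fieldType) (V : vectType k) (val : V -> zinf) (x : k).

(* linear combination alpha_1 B_1 + ... + alpha_(d-1) B_(d-1) + B_d
   (0-based indices: B`_0, ..., B`_(d-1), plus B`_d) *)
Definition comb (d : nat) (B : seq V) (a : 'I_d -> k) : V :=
  \sum_(i < d) a i *: B`_i + B`_d.
Arguments comb : clear implicits.

Inductive loop_run (d : nat) : seq V -> seq V -> Prop :=
| loop_stop (B : seq V) :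
    ~ (exists a : 'I_d -> k, zi_gt0 (val (comb d B a))) -> loop_run d B B
| loop_step (B B' : seq V) (a : 'I_d -> k) :
    zi_gt0 (val (comb d B a)) ->
    loop_run d (set_nth 0 B d (x^-1 *: comb d B a)) B' ->
    loop_run d B B'.

Definition stage_run (d : nat) (B B' : seq V) : Prop :=
  exists n : int, val (B`_d) = Some n /\
    loop_run d (set_nth 0 B d (x ^ (- n) *: B`_d)) B'.

Inductive run_from (r : nat) : nat -> seq V -> seq V -> Prop :=
| run_end (B : seq V) : run_from r r B B
| run_next (d : nat) (B B1 B2 : seq V) :
    (d < r)%N -> stage_run d B B1 -> run_from r d.+1 B1 B2 -> run_from r d B B2.

Definition procedure_run (r : nat) (B B' : seq V) : Prop := run_from r 0 B B'.

End Procedure.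

(* Main.v *)
Require Import Defs.
From HB Require Import structures.
From mathcomp Require Import all_boot all_order all_algebra.
From mathcomp Require Import zify.
Import Order.TTheory GRing.Theory Num.Theory.
Local Open Scope ring_scope.
Set Implicit Arguments.

Lemma zi_le_trans a b c : zi_le a b -> zi_le b c -> zi_le a c.
Proof. case: a b c => [a|] [b|] [c|] //=; exact: le_trans. Qed.

Lemma zi_le_min a b c : zi_le a b -> zi_le a c -> zi_le a (zi_min b c).
Proof. by rewrite /zi_min; case: ifP. Qed.

Section Val.
Variables (k : fieldType) (nu : k -> zinf) (hnu : is_valuation nu).

Lemma nu_None a : nu a = None <-> a = 0. Proof. by case: hnu. Qed.
Lemma nuM a b : nu (a * b) = zi_add (nu a) (nu b). Proof. by case: hnu. Qed.
Lemma nu0 : nu 0 = None. Proof. exact: (proj2 (nu_None 0) erefl). Qed.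

Lemma nu_some {a} : a != 0 -> exists t, nu a = Some t.
Proof.
move=> a0; case E: (nu a) => [t|]; first by exists t.
by move: E => /nu_None E; rewrite E eqxx in a0.
Qed.

Lemma nu1 : nu 1 = Some 0.
Proof.
have [t ht] := nu_some (oner_neq0 _ : (1 : k) != 0).
have := nuM 1 1; rewrite mulr1 ht /= => -[] e; congr Some; lia.
Qed.

Lemma nuV {a t} : nu a = Some t -> nu a^-1 = Some (-t).
Proof.
move=> ht.
have a0 : a != 0 by apply/eqP => a0; move: ht; rewrite a0 nu0.
have := nuM a a^-1; rewrite mulfV // nu1 ht.
by case: (nu a^-1) => [s|] //= [] e; congr Some; lia.
Qed.

Lemma nuN1 : nu (-1) = Some 0.
Proof.
have n0 : (-1 : k) != 0 by rewrite oppr_eq0 oner_neq0.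
have [s hs] := nu_some n0.
have := nuM (-1) (-1); rewrite mulrNN mulr1 nu1 hs /= => -[] e; congr Some; lia.
Qed.

Variables (x : k) (hx : nu x = Some 1).

Lemma x_neq0 : x != 0.
Proof. by apply/eqP => e; move: hx; rewrite e nu0. Qed.

Lemma nu_expn n : nu (x ^+ n) = Some n%:Z.
Proof.
elim: n => [|n IH]; first by rewrite expr0 nu1.
rewrite exprS nuM hx IH /=; congr Some; lia.
Qed.

Lemma nu_expz z : nu (x ^ z) = Some z.
Proof.
case: z => n; first exact: nu_expn.
have -> : x ^ Negz n = (x ^+ n.+1)^-1 by [].
by rewrite (nuV (nu_expn n.+1)) NegzE.
Qed.

Variables (V : vectType k) (val : V -> zinf) (hval : is_value_function nu val).

Lemma val_None v : val v = None <-> v = 0. Proof. by case: hval. Qed.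
Lemma valZ a v : val (a *: v) = zi_add (nu a) (val v). Proof. by case: hval. Qed.
Lemma valD v w : zi_le (zi_min (val v) (val w)) (val (v + w)). Proof. by case: hval. Qed.
Lemma val0 : val 0 = None. Proof. exact: (proj2 (val_None 0) erefl). Qed.

Lemma valN v : val (- v) = val v.
Proof. by rewrite -scaleN1r valZ nuN1; case: (val v) => //= t; rewrite add0r. Qed.

Lemma val_geD m v w : zi_le (Some m) (val v) -> zi_le (Some m) (val w) ->
  zi_le (Some m) (val (v + w)).
Proof. by move=> hv hw; apply: zi_le_trans (valD v w); exact: zi_le_min. Qed.

Lemma val_geB m v w : zi_le (Some m) (val v) -> zi_le (Some m) (val w) ->
  zi_le (Some m) (val (v - w)).
Proof. by move=> hv hw; apply: val_geD => //; rewrite valN. Qed.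

Lemma val_ge_sum m n (F : 'I_n -> V) : (forall i, zi_le (Some m) (val (F i))) ->
  zi_le (Some m) (val (\sum_i F i)).
Proof.
move=> hF; apply: (big_ind (fun v => zi_le (Some m) (val v))) => //.
- by rewrite val0.
- by move=> ? ? ? ?; apply: val_geD.
Qed.

Definition Red d (B : seq V) := forall a : 'I_d -> k, ~~ zi_gt0 (val (comb B a)).

Lemma comb_eq d (B B' : seq V) (a : 'I_d -> k) : (forall i, (i <= d)%N -> B'`_i = B`_i) ->
  comb B' a = comb B a.
Proof.
move=> h; rewrite /comb h //; congr (_ + _); apply: eq_bigr => i _.
by rewrite h // ltnW.
Qed.

Lemma Red_eq d (B B' : seq V) : (forall i, (i <= d)%N -> B'`_i = B`_i) ->
  Red d B -> Red d B'.
Proof. by move=> h hR a; rewrite (@comb_eq d B B' a h). Qed.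

Lemma step_basis (B : seq V) d (w : V) : basis_of fullv B -> (d < size B)%N ->
  B`_d \in <<set_nth 0%R B d w>>%VS -> basis_of fullv (set_nth 0 B d w).
Proof.
move=> hB hd hmem.
have hs : size (set_nth 0 B d w) = size B by rewrite size_set_nth; apply/maxn_idPr.
rewrite basisEdim hs.
move: (hB); rewrite basisEdim => /andP[hspan ->]; rewrite andbT.
apply: subv_trans hspan _; apply/span_subvP => v /(nthP 0) [i hi <-].
have [->|ne] := eqVneq i d; first exact: hmem.
apply: memv_span; apply/(nthP 0); exists i; first by rewrite hs.
by rewrite nth_set_nth /= (negbTE ne).
Qed.

Lemma loop_lemma d (B B' : seq V) : loop_run val x d B B' ->
  (d < size B)%N -> basis_of fullv B -> integralV val B`_d ->
  [/\ basis_of fullv B', size B' = size B,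
      forall i, i != d -> B'`_i = B`_i, integralV val B'`_d & Red d B'].
Proof.
elim=> {B B'} [B hstop | B B' a hgt _ IH] hd hB hint.
  split=> //; move=> a; apply/negP => h; apply: hstop; by exists a.
set w := x^-1 *: comb B a.
have hs : size (set_nth 0 B d w) = size B by rewrite size_set_nth; apply/maxn_idPr.
have hB1 : basis_of fullv (set_nth 0 B d w).
  apply: step_basis => //.
  have -> : B`_d = x *: w - \sum_(i < d) a i *: (set_nth 0 B d w)`_i.
    rewrite /w scalerA mulfV ?x_neq0 // scale1r /comb.
    rewrite [X in _ - X](eq_bigr (fun i => a i *: B`_i)); first by rewrite addrC addKr.
    by move=> i _; rewrite nth_set_nth /= ifN // neq_ltn ltn_ord.
  apply: rpredB.
    apply: rpredZ; apply: memv_span; apply/(nthP 0); exists d; first by rewrite hs.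
    by rewrite nth_set_nth /= eqxx.
  apply: rpred_sum => i _; apply: rpredZ; apply: memv_span; apply: mem_nth.
  by rewrite hs (ltn_trans (ltn_ord i)).
have hint1 : integralV val (set_nth 0 B d w)`_d.
  rewrite nth_set_nth /= eqxx /integralV /w valZ (nuV hx).
  move: hgt; case: (val (comb B a)) => //= t ht; lia.
have hd1 : (d < size (set_nth 0%R B d w))%N by rewrite hs.
have [IH1 IH2 IH3 IH4 IH5] := IH hd1 hB1 hint1.
split=> //; first by rewrite IH2.
by move=> i ne; rewrite IH3 // nth_set_nth /= (negbTE ne).
Qed.

Lemma stage_lemma d (B B' : seq V) : stage_run val x d B B' ->
  (d < size B)%N -> basis_of fullv B ->
  [/\ basis_of fullv B', size B' = size B,
      forall i, i != d -> B'`_i = B`_i, integralV val B'`_d & Red d B'].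
Proof.
move=> [n [hn hl]] hd hB.
set w := x ^ (- n) *: B`_d.
have hs : size (set_nth 0 B d w) = size B by rewrite size_set_nth; apply/maxn_idPr.
have hB1 : basis_of fullv (set_nth 0 B d w).
  apply: step_basis => //.
  have -> : B`_d = x ^ n *: w.
    by rewrite /w scalerA -expfzDr ?x_neq0 // subrr expr0z scale1r.
  apply: rpredZ; apply: memv_span; apply/(nthP 0); exists d; first by rewrite hs.
  by rewrite nth_set_nth /= eqxx.
have hint1 : integralV val (set_nth 0 B d w)`_d.
  by rewrite nth_set_nth /= eqxx /integralV /w valZ nu_expz hn /= addNr.
have hd1 : (d < size (set_nth 0%R B d w))%N by rewrite hs.
have [IH1 IH2 IH3 IH4 IH5] := loop_lemma hl hd1 hB1 hint1.
split=> //; first by rewrite IH2.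
by move=> i ne; rewrite IH3 // nth_set_nth /= (negbTE ne).
Qed.

Lemma run_lemma r d (B B2 : seq V) : run_from val x r d B B2 ->
  size B = r -> basis_of fullv B ->
  (forall i, (i < d)%N -> integralV val B`_i /\ Red i B) ->
  [/\ basis_of fullv B2, size B2 = r &
      forall i, (i < r)%N -> integralV val B2`_i /\ Red i B2].
Proof.
elim=> {d B B2} [B | d B B1 B2 hdr hst _ IH] hs hB hinv; first by split.
have hd1 : (d < size B)%N by rewrite hs.
have [h1 h2 h3 h4 h5] := stage_lemma hst hd1 hB.
apply: IH => //; first by rewrite h2.
move=> i; rewrite ltnS leq_eqVlt => /orP[/eqP -> // | lt].
have [hi hr] := hinv i lt.
have ne : i != d by rewrite neq_ltn lt.
split; first by rewrite h3.
apply: Red_eq hr => j hj; apply: h3; rewrite neq_ltn (leq_ltn_trans hj lt) //.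
Qed.

Lemma key (B : seq V) r : size B = r ->
  (forall i, (i < r)%N -> integralV val B`_i /\ Red i B) ->
  forall j, (j <= r)%N -> forall (c : 'I_j -> k) m,
    zi_le (Some m) (val (\sum_(i < j) c i *: B`_i)) ->
    forall i, zi_le (Some m) (nu (c i)).
Proof.
move=> hs hinv; elim=> [|j IH] hj c m H i; first by case: i.
have [hintj hredj] := hinv j hj.
move: H; rewrite big_ord_recr /=.
set u := \sum_(i < j) _.
move=> H.
case E: (zi_le (Some m) (nu (c ord_max))).
  have hcB : zi_le (Some m) (val (c ord_max *: B`_j)).
    rewrite valZ; move: E hintj; rewrite /integralV.
    case: (nu _) => [s|] //; case: (val _) => [t|] //= h1 h2; lia.
  have hu : zi_le (Some m) (val u).
    by have := @val_geB m _ _ H hcB; rewrite addrK.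
  have [lt|ge] := ltnP i j.
    have -> : i = widen_ord (leqnSn j) (Ordinal lt) by apply: val_inj.
    exact: (IH (ltnW hj) _ _ hu).
  have -> : i = ord_max by apply: val_inj => /=; have := ltn_ord i; lia.
  exact: E.
exfalso.
have [n hn] : exists n, nu (c ord_max) = Some n.
  by move: E; case: (nu _) => [n|] //; exists n.
have c0 : c ord_max != 0 by apply/eqP => e; move: hn; rewrite e nu0.
have := hredj (fun i => (c ord_max)^-1 * c (widen_ord (leqnSn j) i)).
have -> : comb B (fun i => (c ord_max)^-1 * c (widen_ord (leqnSn j) i)) =
          (c ord_max)^-1 *: (u + c ord_max *: B`_j).
  rewrite /comb scalerDr scalerA mulVf // scale1r scaler_sumr; congr (_ + _).
  by apply: eq_bigr => i' _; rewrite scalerA.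
rewrite valZ (nuV hn); move: E H; rewrite hn.
case: (val _) => [t|] //= h1 h2; lia.
Qed.

End Val.
Unset Implicit Arguments.

Theorem mainTheorem2 (k : fieldType) (hchar : [pchar k] =i pred0)
    (nu : k -> zinf) (hnu : is_valuation nu)
    (V : vectType k) (r : nat) (hr : \dim (fullv : {vspace V}) = r)
    (val : V -> zinf) (hval : is_value_function nu val)
    (x : k) (hx : nu x = Some 1%R)
    (B : seq V) (hB : basis_of fullv B) (B' : seq V) :
  procedure_run val x r B B' ->
  basis_of fullv B' /\ is_integral_basis nu val B'.
Proof.
move=> hrun.
have hsB : size B = r by rewrite -hr (size_basis (X := in_tuple B) hB).
have [hB' hs' hinv] := run_lemma hnu hx hval hrun hsB hB (fun i (h : (i < 0)%N) => False_ind _ (notF h)).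
split=> //; split.
- by move=> i hi; rewrite hs' in hi; case: (hinv i hi).
- move=> v hv.
  exists (fun i => coord (in_tuple B') i v); split; last first.
    exact: (coord_basis (X := in_tuple B') hB' (memvf v)).
  move=> i.
  apply: (key hnu hval hs' hinv (eq_leq hs') (fun i => coord (in_tuple B') i v) 0).
  by rewrite -(coord_basis (X := in_tuple B') hB' (memvf v)).
- move=> c _ hc; exact: (freeP (X := in_tuple B') (basis_free hB') c hc).
Qed.
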